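(* Let $\phi$ be a Möbius transformation of $\overline{\mathbb{R}}^n$ with $b:=\phi^{-1}(\infty)\in\mathbb{R}^n\setminus\{0\}$, let $S^{n-1}(b,R)$ be its isometric sphere, $\sigma$ the reflection in it, and $a=\sigma(0)$. Let $\Sigma_0$ be a $k$-dimensional affine plane containing $\phi(0)$ and orthogonal to $\phi(\infty)-\phi(a)$. Then for every $0<r<|b|$, $\Sigma_0\cap\phi(B^n_r)$ is a flat $k$-disk of radius $\dfrac{R^2r}{|b|\sqrt{|b|^2-r^2}}$.
   Context: $B^n_r$ is the open ball of radius $r$ centered at $0$. The reflection in $S^{n-1}(b,R)$ is $\sigma(x)=b+\frac{R^2}{|x-b|^2}(x-b)$ for $x\ne b$, $\sigma(b)=\infty$, $\sigma(\infty)=b$. A Möbius transformation is a finite composition of reflections in spheres or hyperplanes; if $\phi(\infty)\ne\infty$ then $\phi=\psi\circ\sigma$ for a unique reflection $\sigma$ in a sphere centered at $\phi^{-1}(\infty)$ (the isometric sphere) and a unique Euclidean isometry $\psi$. *)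

(* Defs.v *)
From HB Require Import structures.
From mathcomp Require Import all_boot all_order all_algebra.
From mathcomp Require Import reals.
Set Implicit Arguments. Unset Strict Implicit. Unset Printing Implicit Defensive.
Import Order.TTheory GRing.Theory Num.Theory.
Local Open Scope ring_scope.

Section Mobius.
Variables (R : realType) (n : nat).

(* points of \bar{R}^n : Some x for x in R^n, None for infinity *)
Definition ext := option 'rV[R]_n.

Definition dotv (u v : 'rV[R]_n) : R := (u *m v^T) 0 0.
Definition vnorm (u : 'rV[R]_n) : R := Num.sqrt (dotv u u).

Definition ball0 (r : R) (x : 'rV[R]_n) : Prop := vnorm x < r.

Definition sphere_refl (b : 'rV[R]_n) (R0 : R) (x : ext) : ext :=
  match x with
  | None => Some b
  | Some y => if y == b then None
              else Some (b + (R0 ^+ 2 / (vnorm (y - b)) ^+ 2) *: (y - b))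
  end.

Definition plane_refl (u : 'rV[R]_n) (t : R) (x : ext) : ext :=
  match x with
  | None => None
  | Some y => Some (y - (2 * (dotv y u - t) / dotv u u) *: u)
  end.

Inductive refl_data :=
  | SphereR of 'rV[R]_n & R
  | PlaneR of 'rV[R]_n & R.

Definition refl_valid (d : refl_data) : bool :=
  match d with
  | SphereR _ R0 => 0 < R0
  | PlaneR u _ => u != 0
  end.

Definition refl_apply (d : refl_data) : ext -> ext :=
  match d with
  | SphereR b R0 => sphere_refl b R0
  | PlaneR u t => plane_refl u t
  end.

Definition is_mobius (phi : ext -> ext) : Prop :=
  exists l : seq refl_data,
    [/\ (0 < size l)%N, all refl_valid l &
        forall x, phi x = foldr (fun d f => refl_apply d \o f) id l x].

Definition is_isometry (psi : 'rV[R]_n -> 'rV[R]_n) : Prop :=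
  forall x y, vnorm (psi x - psi y) = vnorm (x - y).

Definition ext_map (psi : 'rV[R]_n -> 'rV[R]_n) (x : ext) : ext :=
  match x with None => None | Some y => Some (psi y) end.

(* the k-dimensional affine plane p + rowspace(V), V : 'M_(k,n) of full row rank *)
Definition in_aplane k (p : 'rV[R]_n) (V : 'M[R]_(k, n)) (x : 'rV[R]_n) : bool :=
  ((x - p) <= V)%MS.

End Mobius.

(* Main.v *)
Require Import Defs.
From HB Require Import structures.
From mathcomp Require Import all_boot all_order all_algebra.
From mathcomp Require Import reals ring lra.
Import Order.TTheory GRing.Theory Num.Theory.
Local Open Scope ring_scope.

Section Dot.
Local Set Implicit Arguments. Local Unset Strict Implicit.


Variables (R : realType) (n : nat).
Implicit Types u v w x y : 'rV[R]_n.

Lemma dotvE u v : dotv u v = \sum_(i < n) u 0 i * v 0 i.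
Proof. by rewrite /dotv !mxE; apply: eq_bigr => i _; rewrite !mxE. Qed.

Lemma dotvC u v : dotv u v = dotv v u.
Proof. by rewrite !dotvE; apply: eq_bigr => i _; rewrite mulrC. Qed.

Lemma dotvDl u v w : dotv (u + v) w = dotv u w + dotv v w.
Proof. by rewrite !dotvE -big_split; apply: eq_bigr => i _; rewrite !mxE mulrDl. Qed.

Lemma dotvBl u v w : dotv (u - v) w = dotv u w - dotv v w.
Proof. by rewrite !dotvE -sumrB; apply: eq_bigr => i _; rewrite !mxE mulrBl. Qed.

Lemma dotvZl c u w : dotv (c *: u) w = c * dotv u w.
Proof. by rewrite !dotvE mulr_sumr; apply: eq_bigr => i _; rewrite !mxE mulrA. Qed.

Lemma dotvDr u v w : dotv w (u + v) = dotv w u + dotv w v.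
Proof. by rewrite dotvC dotvDl !(dotvC w). Qed.
Lemma dotvBr u v w : dotv w (u - v) = dotv w u - dotv w v.
Proof. by rewrite dotvC dotvBl !(dotvC w). Qed.
Lemma dotvZr c u w : dotv w (c *: u) = c * dotv w u.
Proof. by rewrite dotvC dotvZl dotvC. Qed.
Lemma dotv0l u : dotv 0 u = 0.
Proof. by rewrite dotvE big1 // => i _; rewrite mxE mul0r. Qed.

Lemma dotv_ge0 u : 0 <= dotv u u.
Proof. by rewrite dotvE sumr_ge0 // => i _; rewrite -expr2 sqr_ge0. Qed.

Lemma dotv_eq0 u : (dotv u u == 0) = (u == 0).
Proof.
apply/idP/idP; last by move/eqP->; rewrite dotv0l.
rewrite dotvE psumr_eq0 => [/allP H|i _]; last by rewrite -expr2 sqr_ge0.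
apply/eqP/rowP => i; rewrite mxE.
have /H : i \in index_enum 'I_n by rewrite mem_index_enum.
by rewrite /= -expr2 sqrf_eq0 => /eqP.
Qed.

Lemma vnorm2 u : vnorm u ^+ 2 = dotv u u.
Proof. by rewrite /vnorm sqr_sqrtr // dotv_ge0. Qed.

Lemma vnorm_lt u c : 0 < c -> (vnorm u < c) = (dotv u u < c ^+ 2).
Proof.
move=> c0; rewrite -vnorm2 ltr_pXn2r // nnegrE; last exact: ltW.
exact: sqrtr_ge0.
Qed.

End Dot.



Section Inv.
Variables (R : realType) (n : nat).
Implicit Types u v y b : 'rV[R]_n.

Lemma sphere_refl_some b (R0 : R) y : y != b ->
  sphere_refl b R0 (Some y) = Some (b + (R0 ^+ 2 / dotv (y - b) (y - b)) *: (y - b)).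
Proof. by move=> /negbTE H /=; rewrite H vnorm2. Qed.

Lemma sphere_invol b (R0 : R) (x : ext R n) : R0 != 0 ->
  sphere_refl b R0 (sphere_refl b R0 x) = x.
Proof.
move=> R00; case: x => [y|] /=; last by rewrite eqxx.
have [->|yb] := eqVneq y b; first by [].
set W := dotv (y - b) (y - b).
have W0 : W != 0 by rewrite /W dotv_eq0 subr_eq0.
set s := R0 ^+ 2 / W.
have s0 : s != 0 by rewrite /s mulf_neq0 ?invr_eq0 ?expf_neq0.
have e : b + s *: (y - b) - b = s *: (y - b) by rewrite addrC addKr.
have vb : b + s *: (y - b) != b.
  by rewrite -subr_eq0 e scaler_eq0 negb_or s0 subr_eq0.
rewrite vnorm2 -/W -/s /= (negbTE vb) vnorm2 e dotvZl dotvZr -/W scalerA.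
have -> : R0 ^+ 2 / (s * (s * W)) * s = 1.
  by rewrite /s; field; rewrite W0 R00.
by rewrite scale1r addrC subrK.
Qed.

Lemma plane_invol u (t : R) (x : ext R n) : u != 0 -> plane_refl u t (plane_refl u t x) = x.
Proof.
move=> u0; case: x => [y|] //=; congr Some.
have U0 : dotv u u != 0 by rewrite dotv_eq0.
rewrite dotvBl dotvZl.
set c := 2 * (dotv y u - t) / dotv u u.
have -> : 2 * (dotv y u - c * dotv u u - t) / dotv u u = - c.
  by rewrite /c; field.
by rewrite scaleNr opprK subrK.
Qed.

Lemma refl_invol (d : refl_data R n) (x : ext R n) : refl_valid d -> refl_apply d (refl_apply d x) = x.
Proof.
case: d => [b R0|u t] /= H; first by apply: sphere_invol; rewrite gt_eqF.
exact: plane_invol.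
Qed.

Lemma foldr_surj [l : seq (refl_data R n)] : all (@refl_valid R n) l ->
  forall x, exists w, foldr (fun d f => refl_apply d \o f) id l w = x.
Proof.
elim: l => [|d l IH] /=; first by move=> _ x; exists x.
move=> /andP[vd vl] x; have [w Hw] := IH vl (refl_apply d x).
by exists w; rewrite /= Hw refl_invol.
Qed.

Lemma mobius_surj (phi : ext R n -> ext R n) : is_mobius phi -> forall x, exists w, phi w = x.
Proof.
move=> [l [_ vl H]] x; have [w Hw] := foldr_surj vl x.
by exists w; rewrite H.
Qed.

End Inv.



Lemma scal (R : realType) (B D K r : R) : 0 < B -> 0 < K -> 0 <= D -> r ^+ 2 < B ->
 (B - K / (D + K / B) < r ^+ 2) = (D < K * r ^+ 2 / (B * (B - r ^+ 2))).
Proof.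
move=> B0 K0 D0 rB.
have W0 : 0 < D + K / B by rewrite ltr_wpDl // divr_gt0.
have Br : 0 < B - r ^+ 2 by rewrite subr_gt0.
have DBK : 0 < D * B + K by rewrite ltr_wpDl // mulr_ge0 // ltW.
set f2 := K * r ^+ 2 - D * B * (B - r ^+ 2).
rewrite -subr_lt0 -[RHS]subr_gt0.
have -> : B - K / (D + K / B) - r ^+ 2 = - (f2 / (D * B + K)).
  by rewrite /f2; field; rewrite !gt_eqF.
have -> : K * r ^+ 2 / (B * (B - r ^+ 2)) - D = f2 / (B * (B - r ^+ 2)).
  by rewrite /f2; field; rewrite !gt_eqF.
by rewrite oppr_lt0 !pmulr_lgt0 // invr_gt0 // mulr_gt0.
Qed.



Lemma core (R : realType) (n : nat) (b a : 'rV[R]_n) (R0 r : R) :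
  b != 0 -> 0 < R0 -> 0 < r -> r < vnorm b ->
  a = b - (R0 ^+ 2 / dotv b b) *: b ->
  forall v, dotv (v - a) b = 0 ->
  v != b /\ forall y, sphere_refl b R0 (Some v) = Some y ->
   (vnorm y < r <-> vnorm (v - a) <
      R0 ^+ 2 * r / (vnorm b * Num.sqrt (vnorm b ^+ 2 - r ^+ 2))).
Proof.
move=> b0 R00 r0 rb ea v ortho.
set B := dotv b b.
have B0 : 0 < B by rewrite lt_def dotv_eq0 b0 dotv_ge0.
have rB : r ^+ 2 < B by rewrite /B -vnorm2 ltrXn2r // ltW.
set q := R0 ^+ 2 / B.
have qB : q * B = R0 ^+ 2 by rewrite /q; field; rewrite gt_eqF.
have va : v - a = (v - b) + q *: b.
  by rewrite ea -/q; apply/rowP => i; rewrite !mxE; ring.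
have vb : v != b.
  apply/eqP => evb; move: ortho; rewrite va evb subrr add0r dotvZl -/B qB.
  by move/eqP; rewrite expf_eq0 /= gt_eqF.
split => // y.
rewrite sphere_refl_some // => -[<-].
set D := dotv (v - a) (v - a).
have wE : v - b = (v - a) - q *: b by rewrite va addrK.
set W := dotv (v - b) (v - b).
have WE : W = D + R0 ^+ 4 / B.
  rewrite /W wE /D; set u := v - a; have o : dotv u b = 0 := ortho.
  clearbody u.
  rewrite dotvBl !dotvBr !dotvZl !dotvZr -/B (dotvC b) o.
  by rewrite /q; field; rewrite gt_eqF.
have X : dotv b (v - b) = - R0 ^+ 2.
  by rewrite wE; set u := v - a; have o : dotv u b = 0 := ortho; clearbody u; rewrite dotvBr dotvZr dotvC o -/B qB sub0r.
have D0 : 0 <= D by exact: dotv_ge0.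
have K0 : 0 < R0 ^+ 4 by rewrite exprn_gt0.
have W0 : 0 < W by rewrite WE ltr_wpDl // divr_gt0.
have YE : dotv (b + (R0 ^+ 2 / W) *: (v - b)) (b + (R0 ^+ 2 / W) *: (v - b))
          = B - R0 ^+ 4 / (D + R0 ^+ 4 / B).
  rewrite !dotvDl !dotvDr !dotvZl !dotvZr -/B -/W (dotvC (v - b) b) X -WE.
  by field; rewrite gt_eqF.
have Br : 0 < B - r ^+ 2 by rewrite subr_gt0.
have vbE : vnorm b = Num.sqrt B by [].
have rho0 : 0 < R0 ^+ 2 * r / (vnorm b * Num.sqrt (vnorm b ^+ 2 - r ^+ 2)).
  by rewrite vnorm2 -/B vbE divr_gt0 ?mulr_gt0 ?exprn_gt0 ?sqrtr_gt0.
rewrite vnorm_lt // vnorm_lt // YE scal // -/D.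
rewrite vnorm2 -/B vbE exprMn exprVn !exprMn !sqr_sqrtr ?(ltW B0) ?(ltW Br) //.
by rewrite -exprD.
Qed.



Lemma polar (R : realType) (n : nat) (P Q S T : 'rV[R]_n) :
  dotv (P - Q) (S - T) = (dotv (P - T) (P - T) + dotv (Q - S) (Q - S)
     - dotv (P - S) (P - S) - dotv (Q - T) (Q - T)) / 2.
Proof.
rewrite !dotvE -big_split -!sumrB mulr_suml; apply: eq_bigr => i _.
rewrite /= !mxE. set p0 := P 0 i; set q0 := Q 0 i; set s0 := S 0 i; set t0 := T 0 i. by field.
Qed.

Lemma iso_dot (R : realType) (n : nat) (psi : 'rV[R]_n -> 'rV[R]_n) P Q S T :
  is_isometry psi ->
  dotv (psi P - psi Q) (psi S - psi T) = dotv (P - Q) (S - T).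
Proof.
move=> iso; rewrite polar [RHS]polar -!vnorm2.
by rewrite !iso.
Qed.

Lemma dotvNN (R : realType) (n : nat) (b : 'rV[R]_n) : dotv (- b) (- b) = dotv b b.
Proof. by rewrite !dotvE; apply: eq_bigr => i _; rewrite !mxE mulrNN. Qed.

Theorem mainTheorem7 (R : realType) (n k : nat)
  (phi : ext R n -> ext R n) (b : 'rV[R]_n) (R0 : R)
  (psi : 'rV[R]_n -> 'rV[R]_n) (a : 'rV[R]_n)
  (p : 'rV[R]_n) (V : 'M[R]_(k, n)) (r : R) :
  is_mobius phi ->
  phi (Some b) = None ->
  b != 0 ->
  (* S^{n-1}(b,R0) is the isometric sphere: phi = psi o sigma *)
  0 < R0 -> is_isometry psi ->
  (forall x, phi x = ext_map psi (sphere_refl b R0 x)) ->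
  (* a = sigma(0) *)
  sphere_refl b R0 (Some 0) = Some a ->
  (* Sigma_0 = p + rowspace V is a k-dimensional affine plane *)
  row_free V ->
  (* containing phi(0) *)
  (forall y, phi (Some 0) = Some y -> in_aplane p V y) ->
  (* orthogonal to phi(infinity) - phi(a) *)
  (forall y z, phi None = Some y -> phi (Some a) = Some z ->
     V *m (y - z)^T = 0) ->
  0 < r -> r < vnorm b ->
  (* Sigma_0 /\ phi(B^n_r) is a flat k-disk of the given radius *)
  exists2 c : 'rV[R]_n, in_aplane p V c &
    forall x : 'rV[R]_n,
      (in_aplane p V x /\ exists2 y, ball0 r y & phi (Some y) = Some x) <->
      (in_aplane p V x /\
       vnorm (x - c) < R0 ^+ 2 * r /
                        (vnorm b * Num.sqrt (vnorm b ^+ 2 - r ^+ 2))).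
Proof.
move=> mob _ b0 R00 iso ephi Ha _ Hpl Hort r0 rb.
have ea : a = b - (R0 ^+ 2 / dotv b b) *: b.
  move: Ha; rewrite sphere_refl_some ?(eq_sym 0) // sub0r dotvNN scalerN.
  by case=> <-.
have Hsa : sphere_refl b R0 (Some a) = Some 0.
  by rewrite -Ha sphere_invol // gt_eqF.
have phiN : phi None = Some (psi b) by rewrite ephi.
have phia : phi (Some a) = Some (psi 0) by rewrite ephi Hsa.
have phi0 : phi (Some 0) = Some (psi a) by rewrite ephi Ha.
have pa := Hpl _ phi0.
have hort := Hort _ _ phiN phia.
have ortho : forall v, in_aplane p V (psi v) -> dotv (v - a) b = 0.
  move=> v pv; rewrite -[b]subr0 -(@iso_dot R n psi v a b 0 iso).
  move: pv pa; rewrite /in_aplane => /submxP[D1 e1] /submxP[D2 e2].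
  have -> : psi v - psi a = (D1 - D2) *m V.
    by rewrite mulmxBl -e1 -e2 opprB addrA subrK.
  by rewrite /dotv -mulmxA hort mulmx0 mxE.
exists (psi a) => // x; split.
- move=> [px [y yr ey]]; split => //.
  move: ey; rewrite ephi.
  case ey : (sphere_refl b R0 (Some y)) => [v|] //= [evx].
  have ov : dotv (v - a) b = 0 by apply: ortho; rewrite evx.
  have [vb Hc] := @core R n b a R0 r b0 R00 r0 rb ea v ov.
  have ey' : sphere_refl b R0 (Some v) = Some y by rewrite -ey sphere_invol // gt_eqF.
  by rewrite -evx iso -(Hc _ ey').
- move=> [px xc]; split => //.
  have [w ew] := @mobius_surj R n phi mob (Some x).
  move: ew; rewrite ephi.
  case ew : (sphere_refl b R0 w) => [v|] //= [evx].
  have ov : dotv (v - a) b = 0 by apply: ortho; rewrite evx.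
  have [vb Hc] := @core R n b a R0 r b0 R00 r0 rb ea v ov.
  case ey : (sphere_refl b R0 (Some v)) => [y|]; last by move: ey; rewrite /= (negbTE vb).
  exists y.
    by rewrite /ball0 (Hc _ ey) -iso evx.
  by rewrite ephi -ey sphere_invol ?gt_eqF //= evx.
Qed.
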